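(* Assume that $b_0 + \sum_{i \in [n]} b_i f_i(x_i) >0$ for every $x \in \mathcal{X}$. If the unary binarization formulation $\{(x,z) : Ax \geq b,\ x_i = p_{i0} + \sum_{j \in [d_i]} (p_{ij} - p_{i,j-1}) z_{ij},\ 1 \geq z_{i1} \geq z_{i2} \geq \cdots \geq z_{id_i} \geq 0,\ z_i \in \{0,1\}^{d_i} \text{ for } i \in [n]\}$ is ideal and, for $i \in [n]$, $g_i(x_i) = 0$, then a linear programming formulation of the problem $$\max \Big\{ \frac{ a_0 + \sum_{i \in [n]}a_i f_i(x_i)}{b_0 + \sum_{i \in [n]} b_i f_i(x_i)} + \sum_{i \in [n]} g_i(x_i) \ \Big|\ x \in P \cap \mathcal{X} \Big\}$$ is given as follows: $$\begin{aligned} \max \quad &a_0 \rho + \sum_{i \in [n]}a_i \mu_i \\ \text{s.t.} \quad & b_0\rho + \sum_{i \in [n]} b_i\mu_i = 1 \\ & \mu_i = f_i(p_{i0}) \cdot \rho + \sum_{j \in [d_i]} \big(f_i(p_{ij}) - f_{i}(p_{i,j-1})\big) \cdot s_{ij} && \text{for } i \in [n] \\ & \rho \geq s_{i1} \geq s_{i2} \geq \cdots \geq s_{id_i} \geq 0 && \text{for } i \in [n] \\ &A y \geq b\rho \quad \text{and} \quad y_i = p_{i0} \cdot \rho + \sum_{j \in [d_i]} (p_{ij} - p_{i,j-1}) \cdot s_{ij} && \text{for } i \in [n]. \end{aligned}$$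
   Context: Let $\mathcal{X} = \prod_{i\in[n]} \{p_{i0}, p_{i1}, \ldots, p_{id_i}\}$ with real $p_{i0} < p_{i1} < \cdots < p_{id_i}$ and positive integers $d_i$, and let $P = \{x \in \mathbb{R}^n : Ax \geq b\}$ be a polytope. Let $a_0,\dots,a_n$ be real numbers, $b_0,\dots,b_n$ nonnegative real numbers, and $f_i, g_i$ univariate functions on $\{p_{i0},\dots,p_{id_i}\}$. An MIP formulation is called ideal if every vertex of its LP relaxation (obtained by dropping integrality) has binary values for the integer-constrained variables. Here $\rho$ plays the role of $1/(b_0+\sum_i b_i f_i(x_i))$, $\mu_i$ of $f_i(x_i)\rho$, $s_{ij}$ of $z_{ij}\rho$, and $y_i$ of $x_i\rho$. *)

(* Defs.v *)
From HB Require Import structures.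
From mathcomp Require Import all_boot all_order all_algebra.
Unset Printing Implicit Defensive.
Import Order.TTheory GRing.Theory Num.Theory.
Local Open Scope ring_scope.

Section Defs.
Variables (R : realFieldType) (n m : nat).

(* Conventions: the paper's index j in [d_i] = {1..d_i} is represented by
   j' : 'I_(d i) with j = j'+1; so the paper's z_{ij} is [z i j'] and the
   coefficient (p_{ij} - p_{i,j-1}) is (p i j'.+1 - p i j').
   p i k for k <= d i is the paper's p_{ik}. *)

Definition inP (A : 'M[R]_(m, n)) (b : 'cV[R]_m) (x : 'I_n -> R) : Prop :=
  forall k : 'I_m, b k ord0 <= \sum_(i < n) A k i * x i.

Definition inX (d : 'I_n -> nat) (p : 'I_n -> nat -> R) (x : 'I_n -> R) : Prop :=
  forall i : 'I_n, exists k : nat, (k <= d i)%N /\ x i = p i k.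

Definition unary_relax (A : 'M[R]_(m, n)) (b : 'cV[R]_m) (d : 'I_n -> nat)
  (p : 'I_n -> nat -> R) (x : 'I_n -> R) (z : forall i : 'I_n, 'I_(d i) -> R) : Prop :=
  inP A b x /\
  forall i : 'I_n,
    x i = p i 0%N + \sum_(j < d i) (p i j.+1 - p i j) * z i j /\
    (forall j : 'I_(d i), z i j <= 1) /\
    (forall j j' : 'I_(d i), (j <= j')%N -> z i j' <= z i j) /\
    (forall j : 'I_(d i), 0 <= z i j).

Definition unary_MIP A b d p x z : Prop :=
  unary_relax A b d p x z /\
  forall i (j : 'I_(d i)), z i j = 0 \/ z i j = 1.

Definition unary_relax_vertex A b d p (x : 'I_n -> R)
    (z : forall i : 'I_n, 'I_(d i) -> R) : Prop :=
  unary_relax A b d p x z /\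
  forall (x1 x2 : 'I_n -> R) (z1 z2 : forall i : 'I_n, 'I_(d i) -> R) (t : R),
    0 < t < 1 -> unary_relax A b d p x1 z1 -> unary_relax A b d p x2 z2 ->
    (forall i, x i = t * x1 i + (1 - t) * x2 i) ->
    (forall i j, z i j = t * z1 i j + (1 - t) * z2 i j) ->
    (forall i, x1 i = x2 i) /\ (forall i j, z1 i j = z2 i j).

Definition unary_ideal A b d p : Prop :=
  forall x z, unary_relax_vertex A b d p x z ->
    forall i (j : 'I_(d i)), z i j = 0 \/ z i j = 1.

Definition is_max_value (T : Type) (Feas : T -> Prop) (F : T -> R) (v : R) : Prop :=
  (exists t, Feas t /\ F t = v) /\ (forall t, Feas t -> F t <= v).

End Defs.

(* Main.v *)
Require Import Defs.
From HB Require Import structures.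
From mathcomp Require Import all_boot all_order all_algebra.
From mathcomp Require Import ring lra.
From Stdlib Require Import Classical FunctionalExtensionality.
Import Order.TTheory GRing.Theory Num.Theory.
Local Open Scope ring_scope.

Section Generic.
Variables (R : realFieldType) (J : Type) (C : finType).
Variables (c : C -> (J -> R) -> R) (beta : C -> R).

Definition linf (L : (J -> R) -> R) :=
  (forall u w, (forall j, u j = w j) -> L u = L w) /\
  (forall (a b : R) u w, L (fun j => a * u j + b * w j) = a * L u + b * L w).

Hypothesis c_lin : forall k, linf (c k).
Definition gfeas q := forall k, beta k <= c k q.
Hypothesis bnd : exists M, forall q, gfeas q -> forall j, `|q j| <= M.
Definition gextreme q := gfeas q /\ forall q1 q2 (t : R), 0 < t < 1 -> gfeas q1 -> gfeas q2 ->
  (forall j, q j = t * q1 j + (1 - t) * q2 j) -> forall j, q1 j = q2 j.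

Lemma linf_move L q dir (lam : R) : linf L ->
  L (fun j => q j + lam * dir j) = L q + lam * L dir.
Proof.
case=> e l; rewrite -[L q]mul1r -l; apply: e => j; by rewrite mul1r.
Qed.

Lemma linf_opp L dir : linf L -> L (fun j => - dir j) = - L dir.
Proof.
case=> e l; have -> : - L dir = (-1) * L dir + 0 * L dir by ring.
rewrite -l; apply: e => j; ring.
Qed.

Lemma linf_sub L u w : linf L -> L (fun j => u j - w j) = L u - L w.
Proof.
case=> e l; have -> : L u - L w = 1 * L u + (-1) * L w by ring.
rewrite -l; apply: e => j; ring.
Qed.

Definition ntight q := #|[pred k | c k q != beta k]|.

Lemma step h q dir (j0 : J) : linf h -> gfeas q -> dir j0 != 0 ->
  (forall k, c k q = beta k -> c k dir = 0) -> 0 <= h dir ->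
  exists q', gfeas q' /\ h q <= h q' /\ (ntight q' < ntight q)%N.
Proof.
move=> hl hq hd0 ht hh.
have [k0 hk0] : exists k, c k dir < 0.
  apply: NNPP => hn.
  have hall : forall k, 0 <= c k dir.
    move=> k; rewrite leNgt; apply/negP => hlt; apply: hn; by exists k.
  case: bnd => M hM.
  have hM0 : 0 <= M by apply: le_trans (hM _ hq j0).
  have hdp : 0 < `|dir j0| by rewrite normr_gt0.
  set lam := (M + `|q j0| + 1) / `|dir j0|.
  have hlam0 : 0 <= lam by rewrite divr_ge0 // addr_ge0 // addr_ge0.
  have hf : gfeas (fun j => q j + lam * dir j).
    move=> k; rewrite linf_move //; have := hq k; have := mulr_ge0 hlam0 (hall k); lra.
  have h1 := hM _ hf j0.
  have h2 := ler_normB (q j0 + lam * dir j0) (q j0).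
  have e3 : q j0 + lam * dir j0 - q j0 = lam * dir j0 by ring.
  rewrite e3 normrM (ger0_norm hlam0) /lam divfK ?gt_eqF // in h2.
  lra.
pose P := [pred k | c k dir < 0].
pose r := fun k => (c k q - beta k) / (- c k dir).
have hP0 : P k0 by [].
case: (arg_minP r hP0) => ks hks hmin.
set lam := r ks.
have hlam0 : 0 <= lam.
  rewrite /lam /r divr_ge0 //; first by rewrite subr_ge0.
  by rewrite oppr_ge0 ltW.
exists (fun j => q j + lam * dir j); split; [|split].
- move=> k; rewrite linf_move //.
  case: (ltP (c k dir) 0) => hk.
  + have h' : lam <= (c k q - beta k) / (- c k dir) := hmin k hk.
    rewrite ler_pdivlMr ?oppr_gt0 // mulrN in h'.
    have := hq k; lra.
  + have := hq k; have := mulr_ge0 hlam0 hk; lra.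
- rewrite linf_move //; have := mulr_ge0 hlam0 hh; lra.
- apply: proper_card; apply/properP; split.
  + apply/subsetP => k; rewrite !inE linf_move //; apply: contraNN => /eqP hk.
    by rewrite (ht _ hk) mulr0 addr0 hk.
  + exists ks; rewrite !inE.
    * apply/negP => /eqP hk; have := ht _ hk; have : c ks dir < 0 := hks; lra.
    * rewrite linf_move // negbK /lam /r; apply/eqP.
      have hne : c ks dir != 0 by rewrite lt_eqF.
      by field.
Qed.

Lemma tight_comb q q1 q2 (t : R) k : 0 < t < 1 -> gfeas q1 -> gfeas q2 ->
  (forall j, q j = t * q1 j + (1 - t) * q2 j) -> c k q = beta k ->
  c k q1 = beta k /\ c k q2 = beta k.
Proof.
move=> /andP[t0 t1] f1 f2 hc hk.
have e : c k q = t * c k q1 + (1 - t) * c k q2.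
  case: (c_lin k) => e l; rewrite -l; exact: e.
have := f1 k; have := f2 k.
move=> a1 a2; split; nra.
Qed.

Lemma Kvert h : linf h -> forall q, gfeas q -> exists u, gextreme u /\ h q <= h u.
Proof.
move=> hl.
suff : forall N q, (ntight q < N)%N -> gfeas q -> exists u, gextreme u /\ h q <= h u.
  move=> H q; exact: (H (ntight q).+1).
elim=> [//|N IH] q hN hq.
case: (classic (gextreme q)) => hext; first by exists q; split.
apply: NNPP => hno; apply: hext; split=> // q1 q2 t ht f1 f2 hc j0.
apply: NNPP => hj.
pose dir := fun j => q1 j - q2 j.
have hd0 : dir j0 != 0 by rewrite /dir subr_eq0; apply/eqP.
have htd : forall k, c k q = beta k -> c k dir = 0.
  move=> k hk; have [e1 e2] := tight_comb _ _ _ _ k ht f1 f2 hc hk.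
  by rewrite /dir linf_sub // e1 e2 subrr.
have fin : forall q', gfeas q' -> h q <= h q' -> (ntight q' < ntight q)%N -> False.
  move=> q' f' hh hc'; have [|u [hu hu']] := IH q' _ f'.
    by apply: leq_trans hc' _.
  apply: hno; exists u; split=> //; exact: le_trans hh hu'.
case: (leP 0 (h dir)) => hs.
- have [q' [f' [hh hc']]] := step _ _ _ _ hl hq hd0 htd hs; exact: fin f' hh hc'.
- have hd1 : (fun j => - dir j) j0 != 0 by rewrite /= oppr_eq0.
  have htd1 : forall k, c k q = beta k -> c k (fun j => - dir j) = 0.
    by move=> k hk; rewrite linf_opp // htd // oppr0.
  have hs1 : 0 <= h (fun j => - dir j) by rewrite linf_opp // oppr_ge0 ltW.
  have [q' [f' [hh hc']]] := step _ _ _ _ hl hq hd1 htd1 hs1; exact: fin f' hh hc'.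
Qed.

End Generic.
Arguments linf {R J}.
Arguments gfeas {R J C}.
Arguments gextreme {R J C}.
Section Concrete.
Variables (R : realFieldType) (n m : nat) (d : 'I_n -> nat) (p : 'I_n -> nat -> R)
  (A : 'M[R]_(m, n)) (b : 'cV[R]_m).

Definition Jt := ('I_n + {i : 'I_n & 'I_(d i)})%type.
Definition Ct := ('I_m + ('I_n * bool) + {i : 'I_n & ('I_(d i) * bool)%type}
                  + {i : 'I_n & ('I_(d i) * 'I_(d i))%type})%type.

Definition xc (q : Jt -> R) (i : 'I_n) : R := q (inl i).
Definition zc (q : Jt -> R) (i : 'I_n) (j : 'I_(d i)) : R :=
  q (inr (@Tagged _ i (fun i => 'I_(d i)) j)).
Definition enc (x : 'I_n -> R) (z : forall i : 'I_n, 'I_(d i) -> R) : Jt -> R :=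
  fun jj => match jj with inl i => x i | inr s => z (tag s) (tagged s) end.

Definition sgn (s : bool) : R := if s then 1 else -1.

Definition cc (k : Ct) (q : Jt -> R) : R :=
  match k with
  | inl (inl (inl k)) => \sum_(i < n) A k i * q (inl i)
  | inl (inl (inr (i, s))) =>
      sgn s * (q (inl i) - \sum_(j < d i) (p i j.+1 - p i j) * zc q i j)
  | inl (inr (existT i (j, s))) => if s then - zc q i j else zc q i j
  | inr (existT i (j, j')) => if (j <= j')%N then zc q i j - zc q i j' else 0
  end.

Definition bt (k : Ct) : R :=
  match k with
  | inl (inl (inl k)) => b k ord0
  | inl (inl (inr (i, s))) => sgn s * p i 0%N
  | inl (inr (existT i (j, s))) => if s then -1 else 0
  | inr _ => 0
  end.

Lemma lsum N (F U W : 'I_N -> R) (a1 b1 : R) :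
  \sum_(i < N) F i * (a1 * U i + b1 * W i) =
  a1 * \sum_(i < N) F i * U i + b1 * \sum_(i < N) F i * W i.
Proof.
rewrite [LHS](eq_bigr (fun i => a1 * (F i * U i) + b1 * (F i * W i))); last by move=> i _; ring.
by rewrite big_split !mulr_sumr.
Qed.

Lemma linf_ext (L : (Jt -> R) -> R) :
  (forall (a1 b1 : R) u w, L (fun j => a1 * u j + b1 * w j) = a1 * L u + b1 * L w) ->
  linf L.
Proof.
move=> hl; split=> // u w e.
by have -> : u = w by apply: functional_extensionality.
Qed.

Lemma cc_lin k : linf (cc k).
Proof.
apply: linf_ext => a1 b1 u w.
case: k => [[[k|[i s]]|[i [j s]]]|[i [j j']]] /=.
- exact: lsum.
- rewrite /zc (lsum _ (fun j : 'I_(d i) => p i j.+1 - p i j)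
     (fun j => u (inr (Tagged (fun i => 'I_(d i)) j)))
     (fun j => w (inr (Tagged (fun i => 'I_(d i)) j)))); ring.
- by case: s => /=; rewrite /zc; ring.
- by case: ifP => _ /=; rewrite /zc; ring.
Qed.

Lemma relax_feas x z : unary_relax R n m A b d p x z -> gfeas cc bt (enc x z).
Proof.
case=> hP hi; case=> [[[k|[i s]]|[i [j s]]]|[i [j j']]] /=.
- exact: hP.
- case: (hi i) => e _.
  have -> : \sum_(j < d i) (p i j.+1 - p i j) * zc (enc x z) i j =
            \sum_(j < d i) (p i j.+1 - p i j) * z i j by [].
  rewrite e; case: s; rewrite /sgn; lra.
- case: (hi i) => _ [h1 [_ h0]]; rewrite /zc /=; case: s.
  + have := h1 j; lra.
  + exact: h0.
- case: (hi i) => _ [_ [hm _]]; rewrite /zc /=; case: ifP => hj //.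
  rewrite subr_ge0; exact: hm.
Qed.

Lemma feas_relax q : gfeas cc bt q -> unary_relax R n m A b d p (xc q) (zc q).
Proof.
move=> hq; split.
  move=> k; exact: (hq (inl (inl (inl k)))).
move=> i; split; [|split; [|split]].
- have := hq (inl (inl (inr (i, true)))); have := hq (inl (inl (inr (i, false)))).
  rewrite /= /sgn /xc; lra.
- move=> j; have := hq (inl (inr (existT _ i (j, true)))); rewrite /= /zc; lra.
- move=> j j' hjj; have := hq (inr (existT _ i (j, j'))); rewrite /= hjj /zc; lra.
- move=> j; exact: (hq (inl (inr (existT _ i (j, false))))).
Qed.


Lemma extreme_vertex q : gextreme cc bt q -> unary_relax_vertex R n m A b d p (xc q) (zc q).
Proof.
case=> hq hext; split; first exact: feas_relax.
move=> x1 x2 z1 z2 t ht r1 r2 hx hz.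
have e := hext (enc x1 z1) (enc x2 z2) t ht (relax_feas _ _ r1) (relax_feas _ _ r2).
have {}e : forall j, enc x1 z1 j = enc x2 z2 j.
  by apply: e; case=> [i|[i j]] /=; [exact: hx | exact: hz].
split; [move=> i; exact: (e (inl i)) | move=> i j; exact: (e (inr (Tagged _ j)))].
Qed.

Lemma bound : (exists M, forall x, inP R n m A b x -> forall i, `|x i| <= M) ->
  exists M, forall q, gfeas cc bt q -> forall j, `|q j| <= M.
Proof.
case=> M hM; exists (`|M| + 1) => q hq; have [hP hi] := feas_relax _ hq.
case=> [i|[i j]].
- have := hM _ hP i; rewrite /xc => h; have := ler_norm M; lra.
- change (`|zc q i j| <= `|M| + 1).
  have [_ [h1 [_ h0]]] := hi i; have := h1 j; have := h0 j.
  move=> a1 a2; rewrite ger0_norm //; have := normr_ge0 M; lra.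
Qed.

Lemma shape D (z : 'I_D -> R) : (forall j, z j = 0 \/ z j = 1) ->
  (forall j j' : 'I_D, (j <= j')%N -> z j' <= z j) ->
  exists2 k, (k <= D)%N & forall j : 'I_D, z j = if (j < k)%N then 1 else 0.
Proof.
elim: D z => [|D IH] z hb hm.
  by exists 0%N => // [[j hj]].
have [k hk hz] := IH (fun j => z (widen_ord (leqnSn D) j)) (fun j => hb _)
  (fun j j' h => hm (widen_ord (leqnSn D) j) (widen_ord (leqnSn D) j') h).
case: (hb ord_max) => hmax.
- exists k; first by apply: leq_trans hk _.
  move=> j; have [jD | jD] := ltnP j D.
  + have -> : j = widen_ord (leqnSn D) (Ordinal jD) by apply: val_inj.
    by rewrite hz.
  + have -> : j = ord_max.
      by apply: val_inj; apply/eqP; rewrite /= eqn_leq -ltnS ltn_ord jD.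
    by rewrite hmax /= ltnNge (leq_trans hk (leqnn D)).
- exists D.+1 => // j; rewrite ltn_ord.
  have := hm j ord_max (leq_ord j); rewrite hmax.
  case: (hb j) => -> //; lra.
Qed.

Lemma enc_sum (P : nat -> R) D k : (k <= D)%N ->
  \sum_(j < D) (P j.+1 - P j) * (if (j < k)%N then 1 else 0) = P k - P 0%N.
Proof.
move=> hk; rewrite -(big_mkord xpredT (fun j => (P j.+1 - P j) * (if (j < k)%N then 1 else 0))).
rewrite (big_cat_nat (leq0n k) hk) /=.
rewrite [X in X + _](eq_big_nat _ _ (F2 := fun j => P j.+1 - P j)); last first.
  by move=> j /andP[_ ->]; rewrite mulr1.
rewrite [X in _ + X](eq_big_nat _ _ (F2 := fun j => 0)); last first.
  by move=> j /andP[hj _]; rewrite ltnNge hj /= mulr0.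
by rewrite big1_eq addr0 telescope_sumr.
Qed.

Variables (f : 'I_n -> R -> R).

Definition Fi (q : Jt -> R) i :=
  f i (p i 0%N) + \sum_(j < d i) (f i (p i j.+1) - f i (p i j)) * zc q i j.
Definition Aff (c0 : R) (al : 'I_n -> R) q := c0 + \sum_(i < n) al i * Fi q i.
Definition AffL (al : 'I_n -> R) q :=
  \sum_(i < n) al i * \sum_(j < d i) (f i (p i j.+1) - f i (p i j)) * zc q i j.

Lemma Aff_split c0 al q :
  Aff c0 al q = (c0 + \sum_(i < n) al i * f i (p i 0%N)) + AffL al q.
Proof.
rewrite /Aff /AffL /Fi.
rewrite (eq_bigr (fun i => al i * f i (p i 0%N) +
   al i * \sum_(j < d i) (f i (p i j.+1) - f i (p i j)) * zc q i j)); last first.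
  by move=> i _; rewrite mulrDr.
by rewrite big_split addrA.
Qed.

Lemma AffL_lin al : linf (AffL al).
Proof.
apply: linf_ext => a1 b1 u w; rewrite /AffL.
rewrite (eq_bigr (fun i => al i * (a1 * \sum_(j < d i) (f i (p i j.+1) - f i (p i j)) * zc u i j
   + b1 * \sum_(j < d i) (f i (p i j.+1) - f i (p i j)) * zc w i j))); last first.
  move=> i _; congr (_ * _); rewrite /zc.
  exact: (lsum _ (fun j : 'I_(d i) => f i (p i j.+1) - f i (p i j))
     (fun j => u (inr (Tagged (fun i => 'I_(d i)) j)))
     (fun j => w (inr (Tagged (fun i => 'I_(d i)) j)))).
exact: lsum.
Qed.


Lemma Kaff (hB : exists M, forall q, gfeas cc bt q -> forall j, `|q j| <= M)
  (c1 c2 : R) al1 al2 v q : gfeas cc bt q ->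
  exists u, gextreme cc bt u /\
    Aff c1 al1 q - v * Aff c2 al2 q <= Aff c1 al1 u - v * Aff c2 al2 u.
Proof.
move=> hq.
have hl : linf (fun q => AffL al1 q - v * AffL al2 q).
  apply: linf_ext => a1 b1 u w.
  rewrite (AffL_lin al1).2 (AffL_lin al2).2; ring.
have [u [hu hh]] := Kvert _ _ _ _ _ cc_lin hB _ hl _ hq.
exists u; split => //; rewrite !Aff_split; lra.
Qed.

Lemma Aff_eq q x c0 al : (forall i, Fi q i = f i (x i)) ->
  Aff c0 al q = c0 + \sum_(i < n) al i * f i (x i).
Proof. by move=> h; rewrite /Aff; congr (_ + _); apply: eq_bigr => i _; rewrite h. Qed.

Lemma ext_grid (hid : unary_ideal R n m A b d p) u : gextreme cc bt u ->
  inP R n m A b (xc u) /\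
  forall i, exists k, (k <= d i)%N /\ xc u i = p i k /\ Fi u i = f i (p i k).
Proof.
move=> hu; have hv := extreme_vertex _ hu; have hb := hid _ _ hv.
have [hP hi] := hv.1; split => // i.
have [e [_ [hm _]]] := hi i.
have [k hk hz] := shape _ (zc u i) (hb i) hm.
exists k; split => //.
have es : forall P : nat -> R, \sum_(j < d i) (P j.+1 - P j) * zc u i j = P k - P 0%N.
  move=> P; rewrite -(enc_sum P _ _ hk); apply: eq_bigr => j _; by rewrite hz.
split.
- rewrite e es; ring.
- rewrite /Fi (es (fun j => f i (p i j))) /=; ring.
Qed.

Lemma grid_pt x : inP R n m A b x -> inX R n d p x ->
  exists q, gfeas cc bt q /\ forall i, Fi q i = f i (x i).
Proof.
move=> hP hX.
have hk : forall i, exists k, (k <= d i)%N && (x i == p i k).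
  move=> i; have [k [h1 h2]] := hX i; exists k; by rewrite h1 h2 eqxx.
pose kk i := ex_minn (hk i).
have hkk : forall i, (kk i <= d i)%N /\ x i = p i (kk i).
  move=> i; rewrite /kk; case: ex_minnP => k /andP[h1 /eqP h2] _; done.
pose z := fun i (j : 'I_(d i)) => (if (j < kk i)%N then 1 else 0 : R).
have es : forall i (P : nat -> R), \sum_(j < d i) (P j.+1 - P j) * z i j = P (kk i) - P 0%N.
  move=> i P; exact: (enc_sum P _ _ (hkk i).1).
exists (enc x z); split.
- apply: relax_feas; split => // i; split; [|split; [|split]].
  + rewrite es -(hkk i).2; ring.
  + move=> j; rewrite /z; case: ifP => _; lra.
  + move=> j j' hjj; rewrite /z; case: ifP => h1; case: ifP => h2 //; try lra.
    by rewrite (leq_ltn_trans hjj h1) in h2.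
  + move=> j; rewrite /z; case: ifP => _; lra.
- move=> i; rewrite /Fi.
  have -> : \sum_(j < d i) (f i (p i j.+1) - f i (p i j)) * zc (enc x z) i j =
            \sum_(j < d i) (f i (p i j.+1) - f i (p i j)) * z i j by [].
  rewrite (es i (fun j => f i (p i j))) /= (hkk i).2; ring.
Qed.

Lemma sum_div N (F G : 'I_N -> R) r :
  \sum_(i < N) F i * (G i / r) = (\sum_(i < N) F i * G i) / r.
Proof. rewrite mulr_suml; apply: eq_bigr => i _; by rewrite mulrA. Qed.

Lemma sum_mul N (F G : 'I_N -> R) r :
  \sum_(i < N) F i * (G i * r) = (\sum_(i < N) F i * G i) * r.
Proof. rewrite mulr_suml; apply: eq_bigr => i _; by rewrite mulrA. Qed.

Variables (a0 : R) (a : 'I_n -> R) (b0 : R) (bb : 'I_n -> R).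

Definition LPfeas (w : R * ('I_n -> R) * (forall i : 'I_n, 'I_(d i) -> R) * ('I_n -> R)) :=
         let: (rho, mu, s, y) := w in
         b0 * rho + \sum_(i < n) bb i * mu i = 1 /\
         (forall i, mu i = f i (p i 0%N) * rho
                          + \sum_(j < d i) (f i (p i j.+1) - f i (p i j)) * s i j) /\
         (forall i (j : 'I_(d i)), s i j <= rho) /\
         (forall i (j j' : 'I_(d i)), (j <= j')%N -> s i j' <= s i j) /\
         (forall i (j : 'I_(d i)), 0 <= s i j) /\
         (forall k : 'I_m, b k ord0 * rho <= \sum_(i < n) A k i * y i) /\
         (forall i, y i = p i 0%N * rho
                          + \sum_(j < d i) (p i j.+1 - p i j) * s i j).

Lemma lp_to_q (hd : forall i, (0 < d i)%N) (hb0 : 0 <= b0) rho mu s y :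
  LPfeas (rho, mu, s, y) -> 0 < rho /\ exists q, gfeas cc bt q /\
    (forall c0 al, Aff c0 al q * rho = c0 * rho + \sum_(i < n) al i * mu i).
Proof.
case=> h1 [h2 [h3 [h4 [h5 [h6 h7]]]]].
have hr0 : rho != 0.
  apply/eqP => r0.
  have s0 : forall i j, s i j = 0.
    by move=> i j; apply/eqP; rewrite eq_le h5 andbT -r0 h3.
  have mu0 : forall i, mu i = 0.
    move=> i; rewrite h2 r0 mulr0 add0r big1 // => j _; by rewrite s0 mulr0.
  move: h1; rewrite r0 mulr0 add0r big1 => [/eqP|i _]; last by rewrite mu0 mulr0.
  by rewrite eq_sym oner_eq0.
have hr1 : 0 <= rho.
  case: (posnP n) => hn.
    move: h1; have -> : \sum_(i < n) bb i * mu i = 0.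
      by apply: big1 => -[i hi] _; exfalso; rewrite hn in hi.
    rewrite addr0 => h1; rewrite leNgt; apply/negP => hneg.
    have := mulr_ge0_le0 hb0 (ltW hneg); lra.
  pose i0 := Ordinal hn; pose j0 := Ordinal (hd i0).
  exact: le_trans (h5 i0 j0) (h3 i0 j0).
have hr : 0 < rho by rewrite lt_neqAle eq_sym hr0.
split => //.
exists (enc (fun i => y i / rho) (fun i j => s i j / rho)); split.
- apply: relax_feas; split.
    move=> k; rewrite (sum_div _ (fun i => A k i) y) ler_pdivlMr //; exact: h6.
  move=> i; split; [|split; [|split]].
  + rewrite (sum_div _ (fun j => p i j.+1 - p i j) (fun j => s i j)) h7; field.
    by [].
  + by move=> j; rewrite ler_pdivrMr // mul1r.
  + by move=> j j' hjj; rewrite ler_pM2r ?invr_gt0 // h4.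
  + by move=> j; rewrite divr_ge0 // ltW.
- have hF : forall i, Fi (enc (fun i => y i / rho) (fun i j => s i j / rho)) i * rho = mu i.
    move=> i; rewrite /Fi.
    have -> : \sum_(j < d i) (f i (p i j.+1) - f i (p i j)) *
       zc (enc (fun i => y i / rho) (fun i j => s i j / rho)) i j =
       \sum_(j < d i) (f i (p i j.+1) - f i (p i j)) * (s i j / rho) by [].
    rewrite (sum_div _ (fun j => f i (p i j.+1) - f i (p i j)) (fun j => s i j)) h2.
    field; by [].
  move=> c0 al; rewrite /Aff mulrDl mulr_suml; congr (_ + _).
  by apply: eq_bigr => i _; rewrite -mulrA hF.
Qed.

Lemma q_to_lp q : gfeas cc bt q -> 0 < Aff b0 bb q ->
  LPfeas ((Aff b0 bb q)^-1, (fun i => Fi q i * (Aff b0 bb q)^-1),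
          (fun i j => zc q i j * (Aff b0 bb q)^-1), (fun i => xc q i * (Aff b0 bb q)^-1))
  /\ a0 * (Aff b0 bb q)^-1 + \sum_(i < n) a i * (Fi q i * (Aff b0 bb q)^-1)
     = Aff a0 a q / Aff b0 bb q.
Proof.
move=> hq hD; set r := (Aff b0 bb q)^-1.
have hr : 0 < r by rewrite invr_gt0.
have [hP hi] := feas_relax _ hq.
have hAff : forall c0 al, c0 * r + \sum_(i < n) al i * (Fi q i * r) = Aff c0 al q * r.
  by move=> c0 al; rewrite sum_mul /Aff mulrDl.
split; last by rewrite hAff.
split; [|split; [|split; [|split; [|split; [|split]]]]].
- rewrite hAff /r divff // gt_eqF //.
- move=> i; rewrite /Fi mulrDl; congr (_ + _).
  by rewrite (sum_mul _ (fun j => f i (p i j.+1) - f i (p i j)) (fun j => zc q i j)).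
- move=> i j; have [_ [h1 _]] := hi i; rewrite ler_piMl //; exact: ltW.
- move=> i j j' hjj; have [_ [_ [hm _]]] := hi i; rewrite ler_pM2r //; exact: hm.
- move=> i j; have [_ [_ [_ h0]]] := hi i; rewrite mulr_ge0 // ltW //.
- move=> k; rewrite (sum_mul _ (fun i => A k i) (fun i => xc q i)) ler_pM2r //; exact: hP.
- move=> i; have [e _] := hi i; rewrite e mulrDl; congr (_ + _).
  by rewrite (sum_mul _ (fun j => p i j.+1 - p i j) (fun j => zc q i j)).
Qed.

End Concrete.

Theorem theorem2 (R : realFieldType) (n m : nat)
    (d : 'I_n -> nat) (p : 'I_n -> nat -> R)
    (A : 'M[R]_(m, n)) (b : 'cV[R]_m)
    (a0 : R) (a : 'I_n -> R) (b0 : R) (bb : 'I_n -> R)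
    (f g : 'I_n -> R -> R) :
  (* d_i positive, p_{i0} < ... < p_{id_i} *)
  (forall i, (0 < d i)%N) ->
  (forall i (k : nat), (k < d i)%N -> p i k < p i k.+1) ->
  (* P = {x : Ax >= b} is a polytope (bounded) *)
  (exists M : R, forall x, inP R n m A b x -> forall i, `|x i| <= M) ->
  (* b_0, ..., b_n nonnegative *)
  0 <= b0 -> (forall i, 0 <= bb i) ->
  (* denominator positive on X *)
  (forall x, inX R n d p x -> 0 < b0 + \sum_(i < n) bb i * f i (x i)) ->
  (* unary binarization formulation is ideal *)
  unary_ideal R n m A b d p ->
  (* g_i(x_i) = 0 *)
  (forall i (k : nat), (k <= d i)%N -> g i (p i k) = 0) ->
  forall v : R,
    is_max_value R _
      (fun x : 'I_n -> R => inP R n m A b x /\ inX R n d p x)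
      (fun x => (a0 + \sum_(i < n) a i * f i (x i)) /
                (b0 + \sum_(i < n) bb i * f i (x i))
                + \sum_(i < n) g i (x i))
      v
    <->
    is_max_value R _
      (fun w : R * ('I_n -> R) * (forall i : 'I_n, 'I_(d i) -> R) * ('I_n -> R) =>
         let: (rho, mu, s, y) := w in
         b0 * rho + \sum_(i < n) bb i * mu i = 1 /\
         (forall i, mu i = f i (p i 0%N) * rho
                          + \sum_(j < d i) (f i (p i j.+1) - f i (p i j)) * s i j) /\
         (forall i (j : 'I_(d i)), s i j <= rho) /\
         (forall i (j j' : 'I_(d i)), (j <= j')%N -> s i j' <= s i j) /\
         (forall i (j : 'I_(d i)), 0 <= s i j) /\
         (forall k : 'I_m, b k ord0 * rho <= \sum_(i < n) A k i * y i) /\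
         (forall i, y i = p i 0%N * rho
                          + \sum_(j < d i) (p i j.+1 - p i j) * s i j))
      (fun w => let: (rho, mu, s, y) := w in a0 * rho + \sum_(i < n) a i * mu i)
      v.
Proof.
move=> hd _ hbnd hb0 _ hden hid hg v.
have hB := bound R n m d p A b hbnd.
pose Num := Aff R n d p f a0 a.
pose Den := Aff R n d p f b0 bb.
have hgz : forall x, inX R n d p x -> \sum_(i < n) g i (x i) = 0.
  move=> x hx; apply: big1 => i _; have [k [hk ->]] := hx i; exact: hg.
have G1 : forall x, inP R n m A b x -> inX R n d p x ->
    exists w, LPfeas R n m d p A b f b0 bb w /\
      (let: (rho, mu, s, y) := w in a0 * rho + \sum_(i < n) a i * mu i) =
      (a0 + \sum_(i < n) a i * f i (x i)) / (b0 + \sum_(i < n) bb i * f i (x i))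
                + \sum_(i < n) g i (x i).
  move=> x hP hX.
  have [q [hq hF]] := grid_pt R n m d p A b f x hP hX.
  have eD : Den q = b0 + \sum_(i < n) bb i * f i (x i) by exact: Aff_eq.
  have eN : Num q = a0 + \sum_(i < n) a i * f i (x i) by exact: Aff_eq.
  have hD : 0 < Den q by rewrite eD; exact: hden.
  have [hlp hobj] := q_to_lp R n m d p A b f a0 a b0 bb q hq hD.
  eexists; split; first exact: hlp.
  by rewrite /= hobj (hgz _ hX) addr0 -eD -eN.
have G2 : forall u, gextreme (cc R n m d p A) (bt R n m d p b) u ->
    inP R n m A b (xc R n d u) /\ inX R n d p (xc R n d u) /\
    0 < Den u /\
    (a0 + \sum_(i < n) a i * f i (xc R n d u i)) /
      (b0 + \sum_(i < n) bb i * f i (xc R n d u i))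
      + \sum_(i < n) g i (xc R n d u i) = Num u / Den u.
  move=> u hu.
  have [hP hk] := ext_grid R n m d p A b f hid u hu.
  have hX : inX R n d p (xc R n d u).
    by move=> i; have [k [h1 [h2 _]]] := hk i; exists k.
  have hF : forall i, Fi R n d p f u i = f i (xc R n d u i).
    by move=> i; have [k [h1 [h2 h3]]] := hk i; rewrite h3 h2.
  have eD : Den u = b0 + \sum_(i < n) bb i * f i (xc R n d u i) by exact: Aff_eq.
  have eN : Num u = a0 + \sum_(i < n) a i * f i (xc R n d u i) by exact: Aff_eq.
  split => //; split => //; split; first by rewrite eD; exact: hden.
  by rewrite (hgz _ hX) addr0 eD eN.
split.
- case=> [[xs [[hPs hXs] hvs]] hmax]; split.
  + have [w [hw hobj]] := G1 xs hPs hXs.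
    exists w; split; first exact: hw.
    by rewrite hobj.
  + case=> [[[rho mu] s] y] hw.
    have [hr [q [hq hA]]] := lp_to_q R n m d p A b f b0 bb hd hb0 rho mu s y hw.
    have [u [hu hh]] := Kaff R n m d p A b f hB a0 b0 a bb v q hq.
    have [hPu [hXu [hDu hFu]]] := G2 u hu.
    have hle := hmax _ (conj hPu hXu); rewrite /= hFu in hle.
    rewrite ler_pdivrMr // in hle.
    have e1 := hA b0 bb; have e2 := hA a0 a.
    rewrite /= -e2.
    have : Num q - v * Den q <= 0 by rewrite /Num /Den; move: hle; rewrite /Num /Den; lra.
    move=> h3; rewrite /Num /Den in h3 e1 hle.
    have [h1 _] := hw; rewrite /= in h1; rewrite h1 in e1.
    have h5 : Aff R n d p f a0 a q * rho - v =
       (Aff R n d p f a0 a q - v * Aff R n d p f b0 bb q) * rho.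
      by rewrite mulrBl -mulrA e1 mulr1.
    have h4 := mulr_le0_ge0 h3 (ltW hr).
    lra.
- case=> [[w [hw hwv]] hmax].
  have hub : forall x, inP R n m A b x /\ inX R n d p x ->
      (a0 + \sum_(i < n) a i * f i (x i)) / (b0 + \sum_(i < n) bb i * f i (x i))
                + \sum_(i < n) g i (x i) <= v.
    move=> x [hP hX]; have [w' [hw' hobj]] := G1 x hP hX.
    rewrite -hobj; exact: hmax.
  split => //.
  move: w hw hwv => [[[rho mu] s] y] hw hwv.
  have [hr [q [hq hA]]] := lp_to_q R n m d p A b f b0 bb hd hb0 rho mu s y hw.
  have [u [hu hh]] := Kaff R n m d p A b f hB a0 b0 a bb v q hq.
  have [hPu [hXu [hDu hFu]]] := G2 u hu.
  exists (xc R n d u); split => //.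
  apply/eqP; rewrite eq_le hub //= hFu ler_pdivlMr //.
  have e1 := hA b0 bb; have e2 := hA a0 a.
  rewrite /= in hwv; rewrite -e2 in hwv.
  rewrite /Num /Den in hh hDu *.
  have [h1 _] := hw; rewrite /= in h1; rewrite h1 in e1.
  have h5 : v - v * Aff R n d p f b0 bb q * rho = 0 by rewrite -mulrA e1; ring.
  have h6 : Aff R n d p f a0 a q * rho - v * Aff R n d p f b0 bb q * rho =
     (Aff R n d p f a0 a q - v * Aff R n d p f b0 bb q) * rho by ring.
  have h8 : (Aff R n d p f a0 a q - v * Aff R n d p f b0 bb q) * rho = 0.
    rewrite -h6; lra.
  move/eqP: h8; rewrite mulf_eq0 (gt_eqF hr) orbF => /eqP h7.
  lra.
Qed.
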